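(* Let $F$ be a 3SAT(3) formula satisfying the standing assumptions below, with variables $x_1,\dots,x_p$ and clauses $c_1,\dots,c_q$, and let $(G_s,L)$ be the temporal star constructed from $F$ as described below. For every nonnegative integer $\beta$: there exists a truth assignment $\tau$ of $F$ satisfying at least $\beta$ clauses of $F$ if and only if there exists a (partial) exploration $J$ of $(G_s,L)$ of size $|J|\ge 3p+\beta$.
   Context: A temporal star $(G_s,L)$ consists of a star $G_s$ with center $c$ and a map $L$ assigning to each edge a finite set of positive integer labels (times at which the edge is available). A journey is a sequence of time edges $(u,u_1,l_1),(u_1,u_2,l_2),\dots$ (each $l_t$ a label of the edge traversed) with strictly increasing labels $l_1<l_2<\cdots$. A (partial) exploration is a journey starting and ending at $c$; an edge $\{c,v\}$ is explored if the journey enters it from $c$ to $v$ at some label and later exits it from $v$ to $c$ at a strictly larger label; the size $|J|$ of an exploration $J$ is the number of edges (equivalently leaves) it explores. 3SAT(3): a CNF formula with variables $x_1,\dots,x_p$ and clauses $c_1,\dots,c_q$, each clause having at most $3$ literals and each variable appearing in at most $3$ clauses. Standing assumptions on $F$: every variable occurs at least once unnegated and at least once negated; if a variable occurs three times it occurs exactly once negated and twice unnegated, and if it occurs twice it occurs once negated and once unnegated. Construction of $(G_s,L)$ from $F$: the star has the following edges. For each $i=1,\dots,p$: an edge $e_i$ with labels $50i-10,\ 50i-7,\ 50i+10,\ 50i+13$; an edge $e_i'$ with labels $50i,\ 50i+1$; an edge $e_i''$ with labels $50i+15,\ 50i+16$. For each clause $c_j$, $j=1,\dots,q$, an edge $e_{p+j}$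 whose labels are: for every variable $x_i$ appearing unnegated in $c_j$ such that $c_j$ is the first clause (in the order $c_1,\dots,c_q$) containing $x_i$ unnegated, the labels $50i-12,\ 50i-9$; for every variable $x_i$ appearing unnegated in $c_j$ such that an earlier clause already contains $x_i$ unnegated, the labels $50i-8,\ 50i-5$; for every variable $x_i$ appearing negated in $c_j$, the labels $50i+8,\ 50i+11$. *)

(* Defs.v *)
From HB Require Import structures.
From mathcomp Require Import all_boot.

Set Implicit Arguments.
Unset Strict Implicit.
Unset Printing Implicit Defensive.

(* A literal is (i, true) for x_i and (i, false) for the negation of x_i;
   variables are x_1, ..., x_p (1-based).       *)
Definition literal := (nat * bool)%type.
Definition clause := seq literal.
Definition formula := seq clause.

(* c_j for 1 <= j <= q *)
Definition clause_at (F : formula) (j : nat) : clause := nth [::] F j.-1.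

Definition occ_pos (F : formula) (i : nat) : nat := count (fun c => (i, true) \in c) F.
Definition occ_neg (F : formula) (i : nat) : nat := count (fun c => (i, false) \in c) F.

Definition wf_3sat3 (p : nat) (F : formula) : Prop :=
  (forall c, c \in F -> size c <= 3 /\ uniq c /\
                         forall i b, (i, b) \in c -> 1 <= i <= p) /\
  (forall i, 1 <= i <= p ->
     [/\ occ_pos F i + occ_neg F i <= 3,
         1 <= occ_pos F i,
         1 <= occ_neg F i,
         occ_pos F i + occ_neg F i = 3 -> occ_neg F i = 1 /\ occ_pos F i = 2
       & occ_pos F i + occ_neg F i = 2 -> occ_neg F i = 1 /\ occ_pos F i = 1]).

Definition lit_true (tau : nat -> bool) (l : literal) : bool := tau l.1 == l.2.
Definition clause_sat (tau : nat -> bool) (c : clause) : bool := has (lit_true tau) c.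
Definition num_sat (tau : nat -> bool) (F : formula) : nat := count (clause_sat tau) F.

(* Leaves: Ee i = leaf of e_i, Ee' i = leaf of e_i', Ee'' i = leaf of e_i'',
   Ec j = leaf of e_{p+j} (clause c_j).                                 *)
Inductive leaf := Ee of nat | Ee' of nat | Ee'' of nat | Ec of nat.

Definition leaf_code (x : leaf) : nat * nat :=
  match x with Ee i => (0, i) | Ee' i => (1, i) | Ee'' i => (2, i) | Ec j => (3, j) end.
Definition leaf_decode (c : nat * nat) : leaf :=
  match c with (0, i) => Ee i | (1, i) => Ee' i | (2, i) => Ee'' i | (_, j) => Ec j end.
Lemma leaf_codeK : cancel leaf_code leaf_decode. Proof. by case. Qed.
HB.instance Definition _ := Equality.copy leaf (can_type leaf_codeK).

Definition valid_leaf (p q : nat) (x : leaf) : bool :=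
  match x with
  | Ee i | Ee' i | Ee'' i => 1 <= i <= p
  | Ec j => 1 <= j <= q
  end.

Definition leaves (p q : nat) : seq leaf :=
  [seq Ee i | i <- iota 1 p] ++ [seq Ee' i | i <- iota 1 p] ++
  [seq Ee'' i | i <- iota 1 p] ++ [seq Ec j | j <- iota 1 q].

Definition first_pos (F : formula) (i j : nat) : bool :=
  ~~ has (fun k => (i, true) \in clause_at F k) (iota 1 j.-1).

Definition lit_labels (F : formula) (j : nat) (l : literal) : seq nat :=
  let i := l.1 in
  if l.2 then
    (if first_pos F i j then [:: 50 * i - 12; 50 * i - 9]
     else [:: 50 * i - 8; 50 * i - 5])
  else [:: 50 * i + 8; 50 * i + 11].

Definition labels (F : formula) (x : leaf) (l : nat) : bool :=
  match x with
  | Ee i => l \in [:: 50 * i - 10; 50 * i - 7; 50 * i + 10; 50 * i + 13]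
  | Ee' i => l \in [:: 50 * i; 50 * i + 1]
  | Ee'' i => l \in [:: 50 * i + 15; 50 * i + 16]
  | Ec j => has (fun lit => l \in lit_labels F j lit) (clause_at F j)
  end.

(* vertices: None = center c, Some x = leaf x *)
Definition vertex := option leaf.

Definition time_edge (p : nat) (F : formula) (u v : vertex) (l : nat) : bool :=
  match u, v with
  | None, Some x | Some x, None => valid_leaf p (size F) x && labels F x l
  | _, _ => false
  end.

(* A journey starting at c is given by J = [:: (w_1,l_1); ...; (w_n,l_n)]:
   it traverses the time edges (w_0,w_1,l_1), ..., (w_{n-1},w_n,l_n)
   with w_0 = c.  *)
Definition jvert (J : seq (vertex * nat)) (t : nat) : vertex :=
  if t is t'.+1 then (nth (None, 0) J t').1 else None.
Definition jlab (J : seq (vertex * nat)) (t : nat) : nat := (nth (None, 0) J t.-1).2.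

Definition is_exploration (p : nat) (F : formula) (J : seq (vertex * nat)) : Prop :=
  (forall t, 1 <= t <= size J -> time_edge p F (jvert J t.-1) (jvert J t) (jlab J t)) /\
  (forall t, 1 <= t < size J -> jlab J t < jlab J t.+1) /\
  jvert J (size J) = None.

Definition explored (J : seq (vertex * nat)) (x : leaf) : bool :=
  has (fun t =>
         (jvert J t.-1 == None) && (jvert J t == Some x) &&
         has (fun t' => (jvert J t'.-1 == Some x) && (jvert J t' == None)
                        && (jlab J t < jlab J t'))
             (iota t.+1 (size J - t)))
      (iota 1 (size J)).

Definition expl_size (p q : nat) (J : seq (vertex * nat)) : nat :=
  count (explored J) (leaves p q).

(* Main.v *)
Require Import Defs.
From mathcomp Require Import all_boot.
From mathcomp Require Import zify.
Set Implicit Arguments. Unset Strict Implicit. Unset Printing Implicit Defensive.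
Definition tok := (nat * nat * nat)%type.
Definition tk (t : tok) := t.1.1.
Definition ts (t : tok) := t.1.2.
Definition te (t : tok) := t.2.
Definition tokvalid (t : tok) : bool :=
  [&& tk t < 4, ts t < 30, te t < 30, ts t < te t &
  match tk t with
  | 0 => (ts t \in [:: 2; 5; 22; 25]) && (te t \in [:: 2; 5; 22; 25])
  | 1 => (ts t \in [:: 12; 13]) && (te t \in [:: 12; 13])
  | 2 => (ts t \in [:: 27; 28]) && (te t \in [:: 27; 28])
  | _ => (ts t \in [:: 0; 3; 4; 7; 20; 23]) && (te t \in [:: 0; 3; 4; 7; 20; 23; 29])
  end].
Definition alltoks : seq tok :=
  [seq t <- [seq (ks, e) | ks <- [seq (k, s) | k <- iota 0 4, s <- iota 0 30], e <- iota 0 30] | tokvalid t].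
Definition tokrel (t u : tok) := te t < ts u.
Fixpoint chains (n m : nat) : seq (seq tok) :=
  if n is n'.+1 then
    [::] :: flatten [seq [seq t :: c | c <- chains n' (te t).+1] | t <- alltoks & m <= ts t]
  else [:: [::]].
Definition posc (t : tok) := (tk t == 3) && (ts t < 10).
Definition negc (t : tok) := (tk t == 3) && ~~ (ts t < 10).
Definition goodc (c : seq tok) : bool :=
  [==> count (fun t => tk t == 0) c <= 1, count (fun t => tk t == 1) c <= 1,
       count (fun t => tk t == 2) c <= 1 => size c <= 3 + maxn (count posc c) (count negc c)].
Lemma check : all goodc (chains 30 0).
Proof. vm_compute. reflexivity. Qed.
Lemma tokvalid_bnd t : tokvalid t -> ts t < te t /\ te t < 30.
Proof. by case/and5P=> _ _ h1 h2. Qed.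

Lemma in_alltoks t : tokvalid t -> t \in alltoks.
Proof.
move=> h; rewrite mem_filter h andTb.
case: t h => [[k s] e] /and5P[h1 h2 h3 _ _].
apply: (@allpairs_f _ _ _ (fun ks e => (ks, e))); last by rewrite mem_iota.
apply: (@allpairs_f _ _ _ (fun k s => (k, s))); by rewrite mem_iota.
Qed.

Lemma chains0 m : chains 0 m = [:: [::]]. Proof. by []. Qed.
Lemma chainsS n m : chains n.+1 m =
  [::] :: flatten [seq [seq t :: c | c <- chains n (te t).+1] | t <- alltoks & m <= ts t].
Proof. by []. Qed.
Arguments chains : simpl never.
Arguments alltoks : simpl never.

Lemma in_chains n m c :
  all tokvalid c -> sorted tokrel c ->
  (if c is t :: _ then m <= ts t else true) -> 30 <= n + m -> c \in chains n m.
Proof.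
elim: n m c => [|n IH] m [|t c].
- by rewrite chains0 inE.
- move=> /andP[/tokvalid_bnd] ? _ _ hm; lia.
- by rewrite chainsS inE eqxx.
- move=> /andP[vt vc] pc hm hn.
  rewrite chainsS inE; apply/orP; right; apply/flattenP.
  exists [seq t :: c0 | c0 <- chains n (te t).+1].
    apply/mapP; exists t => //; by rewrite mem_filter hm in_alltoks.
  apply: map_f; apply: IH => //.
  + exact: path_sorted pc.
  + case: c pc {vc} => [|u c] // /= /andP[]; rewrite /tokrel; lia.
  + move: (tokvalid_bnd vt); lia.
Qed.

Lemma abstract c : all tokvalid c -> sorted tokrel c ->
  count (fun t => tk t == 0) c <= 1 -> count (fun t => tk t == 1) c <= 1 ->
  count (fun t => tk t == 2) c <= 1 -> size c <= 3 + maxn (count posc c) (count negc c).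
Proof.
move=> v s h0 h1 h2.
have: c \in chains 30 0 by apply: in_chains => //; case: c {v s h0 h1 h2}.
move/(allP check); rewrite /goodc h0 h1 h2; by [].
Qed.
Definition blk (a : nat) := (a + 12) %/ 50.
Definition off (a : nat) := (a + 12) %% 50.

Lemma off_in l (s : seq nat) r : (l + 12) %% 50 = r -> r \in s -> off l \in s.
Proof. by rewrite /off => ->. Qed.

Ltac do_off := first
  [ apply: (@off_in _ _ 0); [lia|done] | apply: (@off_in _ _ 2); [lia|done]
  | apply: (@off_in _ _ 3); [lia|done] | apply: (@off_in _ _ 4); [lia|done]
  | apply: (@off_in _ _ 5); [lia|done] | apply: (@off_in _ _ 7); [lia|done]
  | apply: (@off_in _ _ 12); [lia|done] | apply: (@off_in _ _ 13); [lia|done]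
  | apply: (@off_in _ _ 20); [lia|done] | apply: (@off_in _ _ 22); [lia|done]
  | apply: (@off_in _ _ 23); [lia|done] | apply: (@off_in _ _ 25); [lia|done]
  | apply: (@off_in _ _ 27); [lia|done] | apply: (@off_in _ _ 28); [lia|done] ].

Lemma blk_eq l i r : l + 12 = 50 * i + r -> r < 50 -> blk l = i /\ off l = r.
Proof. rewrite /blk /off => h hr; split; lia. Qed.

Lemma clause_at_in F j : 1 <= j <= size F -> clause_at F j \in F.
Proof. rewrite /clause_at; case: j => // j /andP[_ h]; exact: mem_nth. Qed.

Lemma lab_class p F x l : wf_3sat3 p F -> valid_leaf p (size F) x -> labels F x l ->
 match x with
 | Ee k => blk l = k /\ off l \in [:: 2;5;22;25]
 | Ee' k => blk l = k /\ off l \in [:: 12;13]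
 | Ee'' k => blk l = k /\ off l \in [:: 27;28]
 | Ec j => 1 <= blk l <= p /\ (blk l, off l < 10) \in clause_at F j
           /\ off l \in [:: 0;3;4;7;20;23]
 end.
Proof.
move=> [wf1 wf2]; case: x => [k|k|k|j] /= hv.
- move=> H; rewrite !inE in H; case/or4P: H => /eqP -> ; (split; [rewrite /blk; lia | do_off]).
- move=> H; rewrite !inE in H; case/orP: H => /eqP -> ; (split; [rewrite /blk; lia | do_off]).
- move=> H; rewrite !inE in H; case/orP: H => /eqP -> ; (split; [rewrite /blk; lia | do_off]).
- case/hasP => [[i b]] hin.
  have [_ [_ /(_ i b hin) hi]] := wf1 _ (clause_at_in hv).
  rewrite /lit_labels /=.
  case: b hin => hin; [case: (first_pos F i j)|]; move=> H; rewrite !inE in H; case/orP: H => /eqP ->;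
  match goal with |- context [blk ?l] =>
  first [ have [-> ->] := @blk_eq l i 0 ltac:(lia) isT
        | have [-> ->] := @blk_eq l i 3 ltac:(lia) isT
        | have [-> ->] := @blk_eq l i 4 ltac:(lia) isT
        | have [-> ->] := @blk_eq l i 7 ltac:(lia) isT
        | have [-> ->] := @blk_eq l i 20 ltac:(lia) isT
        | have [-> ->] := @blk_eq l i 23 ltac:(lia) isT ] end;
  (split; [exact: hi | split; [exact: hin | done]]).
Qed.

Definition visit := (leaf * (nat * nat))%type.
Definition va (v : visit) := v.2.1.
Definition vb (v : visit) := v.2.2.
Definition good_visit p F (v : visit) :=
  [&& valid_leaf p (size F) v.1, labels F v.1 (va v), labels F v.1 (vb v) & va v < vb v].
Definition chain2 (v w : visit) := [&& va v < vb v, vb v < va w & va w < vb w].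
Lemma chain2_trans : transitive chain2.
Proof. move=> w v u /and3P[h1 h2 h3] /and3P[h4 h5 h6]; apply/and3P; split; lia. Qed.

Definition kindof (x : leaf) := match x with Ee _ => 0 | Ee' _ => 1 | Ee'' _ => 2 | Ec _ => 3 end.
Definition tok_of i (v : visit) : tok :=
  (kindof v.1, off (va v), if blk (vb v) == i then off (vb v) else 29).

Lemma count_le_in (T : eqType) (a b : pred T) (s : seq T) : {in s, forall x, a x -> b x} -> count a s <= count b s.
Proof.
elim: s => //= x s IH h.
have := IH (fun y hy => h y (@mem_behead _ (x :: s) _ hy)).
have := h x (mem_head _ _); case: (a x); case: (b x) => //=; lia.
Qed.

Lemma count_key_le1 (T : Type) (U : eqType) (f : T -> U) s x :
  uniq (map f s) -> count (fun v => f v == x) s <= 1.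
Proof.
move=> u; have := count_uniq_mem x u; rewrite count_map.
rewrite (eq_count (a2 := fun v => f v == x)) => [->|v] /=; first by case: (x \in _).
by rewrite eq_sym.
Qed.

Lemma in4 x : x \in [:: 2;5;22;25] -> x < 26. Proof. rewrite !inE; lia. Qed.
Lemma in2a x : x \in [:: 12;13] -> x < 14. Proof. rewrite !inE; lia. Qed.
Lemma in2b x : x \in [:: 27;28] -> x < 29. Proof. rewrite !inE; lia. Qed.
Lemma in6 x : x \in [:: 0;3;4;7;20;23] -> x < 24.
Proof. rewrite !inE; lia. Qed.

Lemma tokvalid_of p F i v : wf_3sat3 p F -> good_visit p F v -> blk (va v) = i ->
  tokvalid (tok_of i v).
Proof.
move=> wf /and4P[hv la lb hab] hi.
have ca := lab_class wf hv la; have cb := lab_class wf hv lb.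
rewrite /tokvalid /tok_of /tk /ts /te /=.
case: (v.1) hv ca cb => [k|k|k|j] /= hv [ba oa] [bb ob].
- have e : blk (vb v) == i by apply/eqP; lia.
  rewrite e /= oa ob andbT. have := in4 oa; have := in4 ob. rewrite /blk /off in ba bb hi *; lia.
- have e : blk (vb v) == i by apply/eqP; lia.
  rewrite e /= oa ob andbT. have := in2a oa; have := in2a ob. rewrite /blk /off in ba bb hi *; lia.
- have e : blk (vb v) == i by apply/eqP; lia.
  rewrite e /= oa ob andbT. have := in2b oa; have := in2b ob. rewrite /blk /off in ba bb hi *; lia.
- case: oa => _ oa; case: ob => _ ob.
  rewrite oa /=; have := in6 oa.
  case: ifP => e.
  + have ob' : off (vb v) \in [:: 0;3;4;7;20;23;29] by move: ob; rewrite !inE; lia.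
    rewrite ob' andbT; have := in6 ob; move/eqP: e; rewrite /blk /off in hi *; lia.
  + move=> h; apply/and4P; split => //; lia.
Qed.

Lemma blockbound p F Ws i : wf_3sat3 p F -> all (good_visit p F) Ws -> sorted chain2 Ws ->
  uniq (map fst Ws) ->
  size [seq v <- Ws | blk (va v) == i] <=
  3 + maxn (count posc (map (tok_of i) [seq v <- Ws | blk (va v) == i]))
           (count negc (map (tok_of i) [seq v <- Ws | blk (va v) == i])).
Proof.
move=> wf ag so un.
set W := [seq v <- Ws | blk (va v) == i].
have inW v : v \in W -> good_visit p F v /\ blk (va v) = i.
  by rewrite mem_filter => /andP[/eqP h /(allP ag) g].
have unW : uniq (map fst W).
  apply: subseq_uniq un; apply: map_subseq; exact: filter_subseq.
have kk : forall k, k < 3 -> count (fun t => tk t == k) (map (tok_of i) W) <= 1.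
  move=> k hk; rewrite count_map.
  apply: leq_trans (@count_key_le1 _ _ fst W
     (match k with 0 => Ee i | 1 => Ee' i | _ => Ee'' i end) unW).
  apply: count_le_in => v /inW[/and4P[hv la _ _] hb].
  have := lab_class wf hv la; rewrite /preim /= /tk /tok_of /=.
  by case: (v.1) => [m|m|m|m] /=; case: k hk => [|[|[|k]]] //= _ [hm _] /eqP _; rewrite -hm hb.
rewrite -(size_map (tok_of i)); apply: abstract.
- apply/allP => t /mapP[v /inW[g h] ->]; exact: tokvalid_of wf g h.
- rewrite sorted_map.
  apply: (@sub_in_sorted _ (mem W) chain2).
  + move=> v w /inW[g1 h1] /inW[g2 h2] /and3P[c1 c2 c3].
    rewrite /relpre /tokrel /tok_of /te /ts /=.
    case: (boolP (blk (vb v) == i)) => /eqP e; rewrite /blk /off in h1 h2 e *; lia.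
  + by apply/allP.
  + exact: sorted_filter chain2_trans _ _ so.
- exact: kk 0 isT.
- exact: kk 1 isT.
- exact: kk 2 isT.
Qed.

Lemma count_add (T : Type) (a b c : pred T) (s : seq T) :
  (forall x, (c x : nat) = a x + b x) -> count c s = count a s + count b s.
Proof. move=> h; elim: s => //= x s ->; rewrite h; lia. Qed.

Lemma count_clause (P : pred clause) F :
  count P F = count (fun j => P (clause_at F j)) (iota 1 (size F)).
Proof.
rewrite -{1}(mkseq_nth [::] F) /mkseq count_map (iotaDl 1 0) count_map.
by apply: eq_count => x; rewrite /preim /clause_at /=.
Qed.

Definition jof (x : leaf) := match x with Ec j => j | _ => 0 end.

Lemma sat_bound p F Ws (tau : nat -> bool) : wf_3sat3 p F -> all (good_visit p F) Ws ->
  uniq (map fst Ws) ->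
  count (fun v => (kindof v.1 == 3) && (tau (blk (va v)) == (off (va v) < 10))) Ws
  <= num_sat tau F.
Proof.
move=> wf ag un.
set S := fun v => _.
have -> : count S Ws = size (map (fun v => jof v.1) [seq v <- Ws | S v]).
  by rewrite size_map size_filter.
rewrite /num_sat count_clause -size_filter.
apply: uniq_leq_size.
- rewrite (map_comp jof fst) map_inj_in_uniq.
    apply: subseq_uniq un; apply: map_subseq; exact: filter_subseq.
  move=> x y /mapP[v hv ->] /mapP[w hw ->].
  move: hv hw; rewrite !mem_filter /S => /andP[/andP[+ _] _] /andP[/andP[+ _] _].
  by case: (v.1) => // j; case: (w.1) => // j' _ _ /= ->.
- move=> j /mapP[v]; rewrite mem_filter /S => /andP[/andP[k3 ht] /(allP ag)/and4P[hv la _ _]] ->.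
  have := lab_class wf hv la.
  case: (v.1) k3 hv => // j0 _ /= hv [_ [hin _]].
  rewrite mem_filter mem_iota; apply/andP; split; last by move: hv; lia.
  apply/hasP; exists (blk (va v), off (va v) < 10) => //.
Qed.

Lemma split_le x m : ((x <= m.+1) : nat) = (x <= m) + (x == m.+1).
Proof. rewrite leq_eqVlt ltnS; case: eqP => [->|_] /=; by rewrite ?ltnn ?addn0. Qed.

Lemma core p F Ws : wf_3sat3 p F -> all (good_visit p F) Ws -> sorted chain2 Ws ->
  uniq (map fst Ws) -> exists tau, size Ws <= 3 * p + num_sat tau F.
Proof.
move=> wf ag so un.
pose W i := [seq v <- Ws | blk (va v) == i].
pose tau i := count negc (map (tok_of i) (W i)) <= count posc (map (tok_of i) (W i)).
pose S := fun v : visit => (kindof v.1 == 3) && (tau (blk (va v)) == (off (va v) < 10)).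
exists tau.
have hb v : v \in Ws -> 1 <= blk (va v) <= p.
  move/(allP ag)/and4P=> [hv la _ _]; have := lab_class wf hv la.
  by case: (v.1) hv => k /= hv; [case|case|case|case] => -> //.
have blkb i : count (fun v => blk (va v) == i) Ws <=
              3 + count (fun v => S v && (blk (va v) == i)) Ws.
  have -> : count (fun v => S v && (blk (va v) == i)) Ws = count S (W i) by rewrite count_filter.
  rewrite -size_filter.
  apply: leq_trans (blockbound i wf ag so un) _.
  rewrite -/(W i).
  have -> : count S (W i) = if tau i then count posc (map (tok_of i) (W i))
                            else count negc (map (tok_of i) (W i)).
    rewrite !count_map.
    case e: (tau i); apply: eq_in_count => v; rewrite mem_filter => /andP[/eqP h _];
    by rewrite /S /preim /posc /negc /tok_of /tk /ts /= h e //; case: (_ < 10).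
  rewrite /tau /maxn.
  case: (ltnP (count posc (map (tok_of i) (W i))) (count negc (map (tok_of i) (W i)))) => h;
  case: leqP => h'; lia.
have ind m : count (fun v => blk (va v) <= m) Ws <=
             3 * m + count (fun v => S v && (blk (va v) <= m)) Ws.
  elim: m => [|m IH].
    rewrite (@eq_in_count _ _ pred0) ?count_pred0 // => v /hb /=; lia.
  rewrite (@count_add _ (fun v => blk (va v) <= m) (fun v => blk (va v) == m.+1) (fun v => blk (va v) <= m.+1)); last first.
    by move=> v /=; rewrite split_le.
  rewrite (@count_add _ (fun v => S v && (blk (va v) <= m)) (fun v => S v && (blk (va v) == m.+1)) (fun v => S v && (blk (va v) <= m.+1)));
    last first.
    by move=> v /=; case: (S v) => //=; rewrite split_le.
  have := blkb m.+1; lia.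
have e1 : size Ws = count (fun v => blk (va v) <= p) Ws.
  rewrite -(count_predT Ws); apply: eq_in_count => v /hb /=; lia.
have e2 : count (fun v => S v && (blk (va v) <= p)) Ws <= count S Ws.
  by apply: sub_count => v /andP[].
have sb : count S Ws <= num_sat tau F := sat_bound tau wf ag un.
have := ind p; lia.
Qed.

Lemma uniq_leaves p q : uniq (leaves p q).
Proof.
rewrite /leaves !cat_uniq !has_cat !map_inj_uniq ?iota_uniq; try by move=> a b [].
rewrite /=; repeat (apply/andP; split) => //; rewrite ?negb_or; repeat (apply/andP; split);
 apply/hasPn => x /mapP[i _ ->]; apply/negP => /mapP[k _] //.
Qed.

Lemma alt p F J : is_exploration p F J ->
  forall t, t <= size J -> (jvert J t = None <-> t %% 2 = 0).
Proof.
case=> h1 [h2 h3]; elim=> [|t IH] ht; first by [].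
have te : time_edge p F (jvert J t) (jvert J t.+1) (jlab J t.+1) := h1 t.+1 ltac:(lia).
move: te (IH ltac:(lia)); case: (jvert J t) => [x|]; case: (jvert J t.+1) => [y|] //= _ [H1 H2].
- split=> // h; have : t %% 2 <> 0 by move=> /H2. lia.
- split=> // h; have := H1 erefl; lia.
Qed.

Definition leaf_of (o : vertex) := if o is Some x then x else Ee 0.
Definition visits_of (J : seq (vertex * nat)) : seq visit :=
  [seq (leaf_of (jvert J (2 * k).+1), (jlab J (2 * k).+1, jlab J (2 * k).+2)) | k <- iota 0 (size J %/ 2)].

Lemma sorted_iota_map (T : Type) (r : rel T) (f : nat -> T) m n :
  (forall k, m <= k -> k.+1 < m + n -> r (f k) (f k.+1)) -> sorted r (map f (iota m n)).
Proof.
elim: n m => [|n IH] m h //=.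
case: n IH h => [|n] IH h //=.
apply/andP; split; first by apply: h; lia.
have := IH m.+1 (fun k h1 h2 => h k ltac:(lia) ltac:(lia)); by [].
Qed.

Lemma visits_good p F J : is_exploration p F J ->
  all (good_visit p F) (visits_of J) /\ sorted chain2 (visits_of J).
Proof.
move=> ex; have al := alt ex; case: ex => h1 [h2 h3].
have hk k : k < size J %/ 2 -> exists x, jvert J (2 * k).+1 = Some x /\
   good_visit p F (leaf_of (jvert J (2 * k).+1), (jlab J (2 * k).+1, jlab J (2 * k).+2)).
  move=> hk.
  have e0 : jvert J (2 * k) = None by apply/al; lia.
  have e2 : jvert J (2 * k).+2 = None by apply/al; lia.
  have t1 : time_edge p F (jvert J (2 * k)) (jvert J (2 * k).+1) (jlab J (2 * k).+1) :=
    h1 (2 * k).+1 ltac:(lia).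
  have t2 : time_edge p F (jvert J (2 * k).+1) (jvert J (2 * k).+2) (jlab J (2 * k).+2) :=
    h1 (2 * k).+2 ltac:(lia).
  have l12 := h2 (2 * k).+1 ltac:(lia).
  move: t1 t2; rewrite e0 e2; case: (jvert J (2 * k).+1) => [x|] //= /andP[va1 la] /andP[_ lb].
  exists x; split => //; rewrite /good_visit /va /vb /= va1 la lb; exact: l12.
split.
- apply/allP => v /mapP[k]; rewrite mem_iota => /andP[_ hk1] ->.
  by have [x [_ g]] := hk k ltac:(lia).
- apply: sorted_iota_map => k _ hk1.
  rewrite /chain2 /va /vb /=.
  have a1 := h2 (2 * k).+1 ltac:(lia).
  have a2 := h2 (2 * k).+2 ltac:(lia).
  have a3 := h2 (2 * k).+3 ltac:(lia).
  rewrite (_ : (2 * k.+1).+1 = (2 * k).+3); last lia.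
  by apply/and3P; split; [exact: a1 | exact: a2 | exact: a3].
Qed.

Lemma explored_in p F J x : is_exploration p F J -> explored J x -> x \in map fst (visits_of J).
Proof.
move=> ex; have al := alt ex; case: ex => h1 [h2 h3].
case/hasP => t; rewrite mem_iota => ht /andP[/andP[_ /eqP ex] _].
have hn := (proj1 (al _ (leqnn _))) h3.
have ho : t %% 2 <> 0 by move/(proj2 (al t ltac:(lia))); rewrite ex.
apply/mapP; exists (leaf_of (jvert J (2 * (t %/ 2)).+1),
  (jlab J (2 * (t %/ 2)).+1, jlab J (2 * (t %/ 2)).+2)).
  apply: map_f; rewrite mem_iota; lia.
have -> : (2 * (t %/ 2)).+1 = t by lia.
by rewrite ex.
Qed.

Lemma dedup (s : seq visit) : exists s', [/\ subseq s' s, uniq (map fst s') &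
  {subset map fst s <= map fst s'}].
Proof.
elim: s => [|v s [s' [sub un sb]]]; first by exists [::].
case hv: (v.1 \in map fst s').
- exists s'; split => //; first exact: subseq_trans sub (subseq_cons _ _).
  move=> x; rewrite /= inE => /orP[/eqP->|/sb] //.
- exists (v :: s'); split => /=.
  + by rewrite eqxx.
  + by rewrite hv.
  + move=> x; rewrite !inE => /orP[->|/sb ->] //; by rewrite orbT.
Qed.

Lemma backward p F J beta : wf_3sat3 p F -> is_exploration p F J ->
  3 * p + beta <= expl_size p (size F) J -> exists tau, beta <= num_sat tau F.
Proof.
move=> wf ex hs.
have [ag so] := visits_good ex.
have [Ws [sub un sb]] := dedup (visits_of J).
have agW : all (good_visit p F) Ws.
  by apply/allP => v /(mem_subseq sub) /(allP ag).
have [tau htau] := core wf agW (subseq_sorted chain2_trans sub so) un.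
exists tau.
suff h : expl_size p (size F) J <= size Ws.
  by rewrite -(leq_add2l (3 * p)); apply: leq_trans hs _; apply: leq_trans h htau.
rewrite /expl_size -size_filter -(size_map fst Ws).
apply: uniq_leq_size; first by rewrite filter_uniq ?uniq_leaves.
move=> x; rewrite mem_filter => /andP[/(explored_in ex) /sb h _]; exact: h.
Qed.

Definition mkJ (Vs : seq visit) : seq (vertex * nat) :=
  flatten [seq [:: (Some v.1, va v); (None, vb v)] | v <- Vs].

Definition dv : visit := (Ee 0, (0, 0)).

Lemma mkJ_size Vs : size (mkJ Vs) = 2 * size Vs.
Proof. elim: Vs => //= v Vs IH; rewrite /mkJ /= in IH *; rewrite IH; lia. Qed.

Lemma mkJ_nth Vs k : k < size Vs ->
  nth (None, 0) (mkJ Vs) (2 * k) = (Some (nth dv Vs k).1, va (nth dv Vs k)) /\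
  nth (None, 0) (mkJ Vs) (2 * k).+1 = (None, vb (nth dv Vs k)).
Proof.
elim: Vs k => [|v Vs IH] [|k] // hk.
rewrite (_ : 2 * k.+1 = (2 * k).+2); last lia.
exact: IH hk.
Qed.

Lemma mkJ_expl p F Vs : all (good_visit p F) Vs -> sorted chain2 Vs ->
  is_exploration p F (mkJ Vs) /\ forall x, x \in map fst Vs -> explored (mkJ Vs) x.
Proof.
move=> ag so; set n := size Vs.
have sz := mkJ_size Vs.
have jvo k : k < n -> jvert (mkJ Vs) (2 * k).+1 = Some (nth dv Vs k).1.
  by move=> hk; rewrite /jvert (proj1 (mkJ_nth hk)).
have jve k : k <= n -> jvert (mkJ Vs) (2 * k) = None.
  case: k => // k hk; rewrite /jvert (_ : 2 * k.+1 = (2 * k).+2); last lia.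
  by rewrite (proj2 (mkJ_nth (k := k) _)) //; lia.
have jlo k : k < n -> jlab (mkJ Vs) (2 * k).+1 = va (nth dv Vs k).
  by move=> hk; rewrite /jlab /= (proj1 (mkJ_nth hk)).
have jle k : k < n -> jlab (mkJ Vs) (2 * k).+2 = vb (nth dv Vs k).
  by move=> hk; rewrite /jlab /= (proj2 (mkJ_nth hk)).
have gk k : k < n -> good_visit p F (nth dv Vs k).
  by move=> hk; apply: (allP ag); apply: mem_nth.
have par t : 1 <= t -> exists k, t = (2 * k).+1 \/ t = (2 * k).+2.
  move=> ht; exists ((t - 1) %/ 2); lia.
split; first split; [|split|].
- move=> t /andP[t1 t2]; have [k [e|e]] := par t t1; subst t.
  + rewrite succnK (jve k) ?(jvo k) ?(jlo k); try lia.
    by case/and4P: (gk k ltac:(lia)) => h1 h2 _ _; rewrite /= h1 h2.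
  + rewrite succnK (_ : (2 * k).+2 = 2 * k.+1); last lia.
    rewrite (jve k.+1) ?(jvo k); try lia.
    rewrite (_ : 2 * k.+1 = (2 * k).+2); last lia.
    rewrite (jle k); last lia.
    by case/and4P: (gk k ltac:(lia)) => h1 _ h2 _; rewrite /= h1 h2.
- move=> t /andP[t1 t2]; have [k [e|e]] := par t t1; subst t.
  + rewrite (jlo k) ?(jle k); try lia.
    by case/and4P: (gk k ltac:(lia)).
  + rewrite (jle k); last lia.
    rewrite (_ : (2 * k).+3 = (2 * k.+1).+1); last lia.
    rewrite (jlo k.+1); last lia.
    have := (sorted_ltn_nth chain2_trans dv so) k k.+1.
    rewrite !inE => /(_ ltac:(lia) ltac:(lia) (ltnSn k)) /and3P[_ h _]; exact: h.
- by rewrite sz jve.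
- move=> x /mapP[v hv ->]; have [k hk ev] : exists2 k, k < n & v = nth dv Vs k.
    by exists (index v Vs); [rewrite index_mem | rewrite nth_index].
  subst v.
  apply/hasP; exists (2 * k).+1; first by rewrite mem_iota sz; lia.
  rewrite succnK (jve k) ?(jvo k) ?eqxx; try lia.
  apply/hasP; exists (2 * k).+2; first by rewrite mem_iota sz; lia.
  rewrite succnK (jvo k) ?eqxx; last lia.
  rewrite (jlo k) ?(jle k); try lia.
  rewrite (_ : (2 * k).+2 = 2 * k.+1); last lia.
  rewrite (jve k.+1); last lia.
  by case/and4P: (gk k ltac:(lia)).
Qed.

Section Fw.
Variables (p : nat) (F : formula) (tau : nat -> bool).
Let q := size F.
Definition sat j := clause_sat tau (clause_at F j).
Definition ch j := nth (0, true) (clause_at F j) (find (lit_true tau) (clause_at F j)).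
Definition c1 i j := [&& sat j, ch j == (i, true) & first_pos F i j].
Definition c2 i j := [&& sat j, ch j == (i, true) & ~~ first_pos F i j].
Definition c3 i j := sat j && (ch j == (i, false)).
Definition P1 i := [seq (Ec j, (50 * i - 12, 50 * i - 9)) | j <- take 1 [seq j <- iota 1 q | c1 i j]].
Definition P2 i := [seq (Ec j, (50 * i - 8, 50 * i - 5)) | j <- take 1 [seq j <- iota 1 q | c2 i j]].
Definition N3 i := [seq (Ec j, (50 * i + 8, 50 * i + 11)) | j <- take 1 [seq j <- iota 1 q | c3 i j]].
Definition blockV i : seq visit :=
  if tau i then P1 i ++ P2 i ++ [:: (Ee' i, (50 * i, 50 * i + 1)); (Ee i, (50 * i + 10, 50 * i + 13));
                                  (Ee'' i, (50 * i + 15, 50 * i + 16))]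
  else [:: (Ee i, (50 * i - 10, 50 * i - 7)); (Ee' i, (50 * i, 50 * i + 1))] ++ N3 i ++
       [:: (Ee'' i, (50 * i + 15, 50 * i + 16))].
Definition Vs := flatten [seq blockV i | i <- iota 1 p].

Lemma ch_prop j : sat j -> ch j \in clause_at F j /\ lit_true tau (ch j).
Proof.
rewrite /sat /clause_sat => h; split; first by apply: mem_nth; rewrite -has_find.
exact: nth_find.
Qed.

Lemma take1 (s : seq nat) : take 1 s = [::] \/ exists x, take 1 s = [:: x].
Proof. case: s => [|x s]; [left | right; exists x] => //=. by rewrite take0. Qed.

Definition inrange i (v : visit) := [&& 50 * i - 12 <= va v, va v < vb v & vb v <= 50 * i + 16].

Lemma block_ok i : 1 <= i -> pairwise chain2 (blockV i) && all (inrange i) (blockV i).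
Proof.
move=> hi; rewrite /blockV /P1 /P2 /N3.
case: (tau i).
- case: (take1 [seq j <- iota 1 q | c1 i j]) => [->|[j1 ->]];
  case: (take1 [seq j <- iota 1 q | c2 i j]) => [->|[j2 ->]];
  rewrite /= /chain2 /inrange /va /vb /=; repeat (apply/andP; split) => //; lia.
- case: (take1 [seq j <- iota 1 q | c3 i j]) => [->|[j1 ->]];
  rewrite /= /chain2 /inrange /va /vb /=; repeat (apply/andP; split) => //; lia.
Qed.

Lemma pairwise_flat m n : pairwise chain2 (flatten [seq blockV i | i <- iota m.+1 n]).
Proof.
elim: n m => [|n IH] m //=.
rewrite pairwise_cat IH andbT.
have /andP[pw al] := block_ok (ltn0Sn m); rewrite pw andbT.
apply/allrelP => v w hv /flattenP[s /mapP[i]]; rewrite mem_iota => hi -> hw.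
have /andP[_ /allP /(_ w hw)] := block_ok (i := i) ltac:(lia).
move/allP: al => /(_ v hv).
rewrite /inrange /chain2 => /and3P[a1 a2 a3] /and3P[b1 b2 b3]; apply/and3P; split => //; lia.
Qed.
End Fw.

Lemma good_clause p F j a b (lit : literal) : 1 <= j <= size F -> lit \in clause_at F j ->
  a \in lit_labels F j lit -> b \in lit_labels F j lit -> a < b -> good_visit p F (Ec j, (a, b)).
Proof.
move=> hj hl ha hb hab; rewrite /good_visit /va /vb /= hj hab andbT.
by rewrite /=; apply/andP; split; apply/hasP; exists lit.
Qed.

Lemma in_filt (P : pred nat) q j : j \in take 1 [seq j <- iota 1 q | P j] -> 1 <= j <= q /\ P j.
Proof. move/mem_take; rewrite mem_filter mem_iota => /andP[-> h]; split => //; lia. Qed.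

Lemma Vs_good p F tau : all (good_visit p F) (Vs p F tau).
Proof.
apply/allP => v /flattenP[s /mapP[i]]; rewrite mem_iota => hi -> {s}.
have vi : valid_leaf p (size F) (Ee i) by rewrite /= ; lia.
rewrite /blockV; case: (tau i); rewrite !mem_cat.
- case/orP => [/mapP[j /in_filt[hj /and3P[s /eqP c f]] ->]|].
    have [hin _] := ch_prop s; rewrite c in hin.
    move: (@good_clause p F j (50 * i - 12) (50 * i - 9) _ hj hin); rewrite /lit_labels /= f.
    apply; rewrite ?inE ?eqxx ?orbT //; lia.
  case/orP => [/mapP[j /in_filt[hj /and3P[s /eqP c f]] ->]|].
    have [hin _] := ch_prop s; rewrite c in hin.
    move: (@good_clause p F j (50 * i - 8) (50 * i - 5) _ hj hin); rewrite /lit_labels /= (negbTE f).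
    apply; rewrite ?inE ?eqxx ?orbT //; lia.
  rewrite !inE => /or3P[] /eqP ->; rewrite /good_visit /va /vb /= !inE ?eqxx ?orbT /=;
    (apply/andP; split; [lia|]; lia).
- case/orP => [|/orP[/mapP[j /in_filt[hj /andP[s /eqP c]] ->]|]].
  + rewrite !inE => /orP[] /eqP ->; rewrite /good_visit /va /vb /= !inE ?eqxx ?orbT /=;
    (apply/andP; split; [lia|]; lia).
  + have [hin _] := ch_prop s; rewrite c in hin.
    move: (@good_clause p F j (50 * i + 8) (50 * i + 11) _ hj hin); rewrite /lit_labels /=.
    apply; rewrite ?inE ?eqxx ?orbT //; lia.
  + rewrite !inE => /eqP ->; rewrite /good_visit /va /vb /= !inE ?eqxx ?orbT /=;
    (apply/andP; split; [lia|]; lia).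
Qed.

Lemma count_ge (P : pred nat) q s : uniq s -> (forall j, j \in s -> 1 <= j <= q /\ P j) ->
  size s <= count P (iota 1 q).
Proof.
move=> u h; rewrite -size_filter; apply: uniq_leq_size => // j /h [hj pj].
rewrite mem_filter mem_iota pj /=; lia.
Qed.

Lemma take1_of (s : seq nat) x : x \in s -> (forall y, y \in s -> y = x) -> take 1 s = [:: x].
Proof. case: s => [|y s] // _ h; by rewrite /= take0 (h y (mem_head _ _)). Qed.

Lemma lit_var p F j lit : wf_3sat3 p F -> 1 <= j <= size F -> lit \in clause_at F j -> 1 <= lit.1 <= p.
Proof. case=> wf1 _ hj; case: lit => i b hin; have [_ [_ h]] := wf1 _ (clause_at_in hj); exact: h hin. Qed.

Lemma occ_pos_iota F i : occ_pos F i = count (fun j => (i, true) \in clause_at F j) (iota 1 (size F)).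
Proof. exact: (count_clause (fun c => (i, true) \in c)). Qed.
Lemma occ_neg_iota F i : occ_neg F i = count (fun j => (i, false) \in clause_at F j) (iota 1 (size F)).
Proof. exact: (count_clause (fun c => (i, false) \in c)). Qed.

Lemma U1 F tau i j j' : c1 F tau i j -> c1 F tau i j' -> 1 <= j -> 1 <= j' -> j = j'.
Proof.
move=> h h' hj hj'.
have hin : forall j, c1 F tau i j -> (i, true) \in clause_at F j.
  by move=> k /and3P[s /eqP c _]; have [+ _] := ch_prop s; rewrite c.
case: (ltngtP j j') => // hl.
- move: h' => /and3P[_ _ /negP]; case; apply/hasP; exists j; last exact: hin.
  rewrite mem_iota; lia.
- move: h => /and3P[_ _ /negP]; case; apply/hasP; exists j'; last exact: hin.
  rewrite mem_iota; lia.
Qed.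

Lemma U2' p F tau i j j' : wf_3sat3 p F -> c2 F tau i j -> c2 F tau i j' -> j < j' ->
  1 <= j <= size F -> 1 <= j' <= size F -> False.
Proof.
move=> wf h h' hl hj hj'.
have hin : forall j, c2 F tau i j -> (i, true) \in clause_at F j.
  by move=> k /and3P[s /eqP c _]; have [+ _] := ch_prop s; rewrite c.
move: (h) => /and3P[_ _]; rewrite negbK => /hasP[k]; rewrite mem_iota => hk hink.
have hi := lit_var wf hj (hin _ h).
case: wf => _ /(_ i hi) [s3 pos1 neg1 _ _].
have : 3 <= occ_pos F i.
  rewrite occ_pos_iota; apply: (@count_ge _ _ [:: k; j; j']).
    rewrite /= !inE; apply/andP; split; first by apply/norP; split; apply/eqP; lia.
    rewrite andbT; apply/eqP; lia.
  move=> x; rewrite !inE => /or3P[] /eqP ->; (split; [lia|]); [exact: hink | exact: hin | exact: hin].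
lia.
Qed.

Lemma U2 p F tau i j j' : wf_3sat3 p F -> c2 F tau i j -> c2 F tau i j' ->
  1 <= j <= size F -> 1 <= j' <= size F -> j = j'.
Proof.
move=> wf h h' hj hj'; case: (ltngtP j j') => // hl.
- by case: (U2' wf h h' hl hj hj').
- by case: (U2' wf h' h hl hj' hj).
Qed.

Lemma U3 p F tau i j j' : wf_3sat3 p F -> c3 F tau i j -> c3 F tau i j' ->
  1 <= j <= size F -> 1 <= j' <= size F -> j = j'.
Proof.
move=> wf h h' hj hj'.
have hin : forall j, c3 F tau i j -> (i, false) \in clause_at F j.
  by move=> k /andP[s /eqP c]; have [+ _] := ch_prop s; rewrite c.
have hi := lit_var wf hj (hin _ h).
case: (eqVneq j j') => // hne.
case: wf => _ /(_ i hi) [s3 pos1 neg1 e3 e2].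
have : 2 <= occ_neg F i.
  rewrite occ_neg_iota; apply: (@count_ge _ _ [:: j; j']).
    by rewrite /= inE hne.
  move=> x; rewrite !inE => /orP[] /eqP ->; (split; [lia|]); exact: hin.
case: (eqVneq (occ_pos F i + occ_neg F i) 3) => [/e3|n3]; first lia.
case: (eqVneq (occ_pos F i + occ_neg F i) 2) => [/e2|n2]; first lia.
lia.
Qed.

Lemma in_Vs_block p F tau i v : 1 <= i <= p -> v \in blockV F tau i -> v \in Vs p F tau.
Proof.
move=> hi hv; apply/flattenP; exists (blockV F tau i) => //.
apply: map_f; rewrite mem_iota; lia.
Qed.

Lemma Ec_in_Vs p F tau j : wf_3sat3 p F -> 1 <= j <= size F -> sat F tau j ->
  Ec j \in map fst (Vs p F tau).
Proof.
move=> wf hj s.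
have [hin lt] := ch_prop s.
case e: (ch F tau j) hin lt => [i b] hin lt.
have hi : 1 <= i <= p := lit_var wf hj hin.
rewrite /lit_true /= in lt.
apply/mapP.
case: b e hin lt => e hin /eqP lt.
- case fp: (first_pos F i j).
  + exists (Ec j, (50 * i - 12, 50 * i - 9)) => //.
    apply: (in_Vs_block hi); rewrite /blockV lt /P1 (@take1_of _ j).
    * by rewrite mem_cat mem_head.
    * by rewrite mem_filter mem_iota /c1 s e fp eqxx /=; lia.
    * move=> y; rewrite mem_filter mem_iota => /andP[cy hy].
      apply: (U1 cy); [by rewrite /c1 s e fp eqxx | lia | lia].
  + exists (Ec j, (50 * i - 8, 50 * i - 5)) => //.
    apply: (in_Vs_block hi); rewrite /blockV lt /P2 (@take1_of _ j).
    * by rewrite !mem_cat mem_head orbT.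
    * by rewrite mem_filter mem_iota /c2 s e fp eqxx /=; lia.
    * move=> y; rewrite mem_filter mem_iota => /andP[cy hy].
      apply: (U2 wf cy); [by rewrite /c2 s e fp eqxx | lia | lia].
- exists (Ec j, (50 * i + 8, 50 * i + 11)) => //.
  apply: (in_Vs_block hi); rewrite /blockV lt /N3 (@take1_of _ j).
  * by rewrite !mem_cat mem_head orbT.
  * by rewrite mem_filter mem_iota /c3 s e eqxx /=; lia.
  * move=> y; rewrite mem_filter mem_iota => /andP[cy hy].
    apply: (U3 wf cy); [by rewrite /c3 s e eqxx | lia | lia].
Qed.

Lemma Ee_in_Vs p F tau i : 1 <= i <= p ->
  [/\ Ee i \in map fst (Vs p F tau), Ee' i \in map fst (Vs p F tau) & Ee'' i \in map fst (Vs p F tau)].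
Proof.
move=> hi; split; apply/mapP.
- case t: (tau i); [exists (Ee i, (50 * i + 10, 50 * i + 13)) | exists (Ee i, (50 * i - 10, 50 * i - 7))] => //;
  apply: (in_Vs_block hi); rewrite /blockV t !mem_cat !inE eqxx ?orbT //.
- case t: (tau i); exists (Ee' i, (50 * i, 50 * i + 1)) => //;
  apply: (in_Vs_block hi); rewrite /blockV t !mem_cat !inE eqxx ?orbT //.
- case t: (tau i); exists (Ee'' i, (50 * i + 15, 50 * i + 16)) => //;
  apply: (in_Vs_block hi); rewrite /blockV t !mem_cat !inE eqxx ?orbT //.
Qed.

Lemma forward p F beta : wf_3sat3 p F -> (exists tau, beta <= num_sat tau F) ->
  exists J, is_exploration p F J /\ 3 * p + beta <= expl_size p (size F) J.
Proof.
move=> wf [tau ht].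
have so : sorted chain2 (Vs p F tau).
  by rewrite (sorted_pairwise chain2_trans); exact: (pairwise_flat F tau 0 p).
have [ex hx] := mkJ_expl (Vs_good p F tau) so.
exists (mkJ (Vs p F tau)); split => //.
rewrite /expl_size /leaves !count_cat !count_map.
have cp : forall (f : nat -> leaf), (forall i, 1 <= i <= p -> f i \in map fst (Vs p F tau)) ->
   count (preim f (explored (mkJ (Vs p F tau)))) (iota 1 p) = p.
  move=> f hf; rewrite (@eq_in_count _ _ predT) ?count_predT ?size_iota //.
  move=> i; rewrite mem_iota => hi; rewrite /preim /=; apply: hx; apply: hf; lia.
rewrite !cp; first last.
- by move=> i /(Ee_in_Vs F tau)[].
- by move=> i /(Ee_in_Vs F tau)[].
- by move=> i /(Ee_in_Vs F tau)[].
have : num_sat tau F <= count (preim Ec (explored (mkJ (Vs p F tau)))) (iota 1 (size F)).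
  rewrite /num_sat count_clause; apply: count_le_in => j; rewrite mem_iota => hj sj.
  apply: hx; apply: (Ec_in_Vs wf) => //; lia.
move=> h; rewrite (_ : 3 * p = p + (p + p)); last lia.
rewrite -!addnA !leq_add2l; exact: leq_trans ht h.
Qed.

Unset Implicit Arguments.
Theorem lemma2 (p : nat) (F : formula) (beta : nat) :
  wf_3sat3 p F ->
  (exists tau : nat -> bool, beta <= num_sat tau F) <->
  (exists J : seq (vertex * nat),
      is_exploration p F J /\ 3 * p + beta <= expl_size p (size F) J).
Proof.
move=> wf; split; first exact: forward.
by case=> J [ex hs]; exact: backward wf ex hs.
Qed.
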